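(* Let $p$ be an odd prime, $r\ge3$ with $p\nmid r$, $D=\mathrm{D}_{2r}$, and let $G=V\rtimes_\psi D$ with $V=\mathbb{Z}_p^d$ and $\psi:D\to\mathrm{GL}(V)$ irreducible and non-trivial. Let $A=\mathrm{Aut}(G)$. Then $A=\mathrm{Inn}_G(V)\rtimes\mathrm{N}_A(D)$, and $\mathrm{Inn}_G(V)\cong V$.
   Context: $\mathrm{D}_{2r}$ is the dihedral group of order $2r$; $V\rtimes_\psi D$ is the semidirect product where $D$ acts on $V=\mathbb{F}_p^d$ via the representation $\psi$ over $\mathbb{F}_p$. For $g\in G$, $\tilde g$ is the inner automorphism $h\mapsto ghg^{-1}$, and for $H\le G$, $\mathrm{Inn}_G(H)=\{\tilde h: h\in H\}\le\mathrm{Aut}(G)$. $\mathrm{N}_A(D)=\{f\in A: f(D)=D\}$. *)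

(* Defs.v *)
From mathcomp Require Import all_boot all_fingroup all_solvable.
Set Implicit Arguments. Unset Strict Implicit. Unset Printing Implicit Defensive.
Local Open Scope group_scope.

(* Inn_G(H) = { inner automorphism of G induced by h : h in H } as a subset of Aut G.
   conj_aut G h is the automorphism y |-> y ^ h = h^-1 y h of G; as h ranges over
   a group H, this is the same set as { y |-> h y h^-1 : h in H }. *)
Definition InnG (gT : finGroupType) (G : {group gT}) (H : {set gT}) : {set {perm gT}} :=
  [set conj_aut G h | h in H].

Definition NA (gT : finGroupType) (A : {set {perm gT}}) (D : {set gT}) :
  {set {perm gT}} := [set f in A | f @: D == D].

(* Main.v *)
Require Import Defs.
From mathcomp Require Import all_boot all_fingroup all_solvable.
Local Open Scope group_scope.

Section NAgrp.
Variables (gT : finGroupType) (G D : {group gT}).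
Lemma NA_group_set : group_set (NA (Aut G) D).
Proof.
apply/group_setP; split.
  rewrite inE group1 /=; apply/eqP/setP => x.
  apply/imsetP/idP => [[y Dy ->]|Dx]; first by rewrite perm1.
  by exists x; rewrite ?perm1.
move=> f g /setIdP[Af /eqP fD] /setIdP[Ag /eqP gD].
rewrite inE groupM //=; apply/eqP.
rewrite -[in RHS]gD -[in RHS]fD -imset_comp.
by apply: eq_imset => x; rewrite permM.
Qed.
Canonical NA_group := group NA_group_set.
End NAgrp.

Theorem lemma5p1 (gT : finGroupType) (p r : nat) (G V D : {group gT}) :
  prime p -> odd p -> 2 < r -> ~~ (p %| r) ->
  D \isog 'D_(r.*2) ->
  p.-abelem V ->
  V ><| D = G ->
  acts_irreducibly D V 'J ->
  ~~ (D \subset 'C(V)) ->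
  InnG G V ><| NA (Aut G) D = Aut G /\ InnG G V \isog V.
Proof.
move=> pr_p odd_p r_gt2 pNr isoD abV defG irrV ncDV.
have [nVG sDG mulVD nVD tiVD] := sdprod_context defG.
have sVG : V \subset G by case/andP: nVG.
have pV := abelem_pgroup abV.
have oD : #|D| = r.*2.
  by rewrite (card_isog isoD) card_dihedral // ltnW.
have p'D : p^'.-nat #|D|.
  rewrite p'natE // oD -mul2n; rewrite Euclid_dvdM // negb_or pNr andbT; apply/negP.
    move/(dvdn_leq (isT : 0 < 2)); rewrite leq_eqVlt => /orP[/eqP p2|].
      by move: odd_p; rewrite p2.
    by rewrite ltnS leqNgt prime_gt1.

have coVD : coprime #|V| #|D| := pnat_coprime pV p'D.
have hallV : p.-Hall(G) V.
  rewrite /pHall sVG pV /= -divgS // -(sdprod_card defG) mulKn //.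
have chV : V \char G.
  by rewrite -(normal_Hall_pcore hallV nVG) pcore_char.
have autV f : f \in Aut G -> f @: V = V.
  move=> Af; apply/eqP; rewrite eqEcard card_imset ?leqnn ?andbT; last exact: perm_inj.
  by case/andP: chV => _ /forall_inP; apply.
have cVD1 v : v \in V -> v \in 'C(D) -> v = 1.
  move=> Vv cDv; apply/eqP; apply: contraR ncDV => nv1.
  have ntC : 'C_V(D) :!=: 1 by apply/trivgPn; exists v; rewrite // inE Vv.
  case/mingroupP: irrV => _ minV.
  have := minV 'C_V(D)%G.
  rewrite ntC /= /acts_on astabsJ normsI ?norms_cent ?normG // subsetIl.
  by move=> /(_ isT isT) eqC; rewrite centsC -eqC subsetIr.
have sVN : V \subset 'N(G) := subset_trans sVG (normG G).
have InnE : InnG G V = conj_aut G @* V by rewrite morphimEsub.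
have AutC w : w \in G -> conj_aut G w \in Aut G.
  move=> Gw; apply: (subsetP (Aut_conj_aut _ G)).
  by rewrite mem_morphim // (subsetP (normG G)).
have conjK h v : h \in Aut G -> v \in G -> (conj_aut G v) ^ h = conj_aut G (h v).
  move=> Ah Gv; have Ahv : h v \in G := Aut_closed Ah Gv.
  apply: (eq_Aut (groupJ (AutC v Gv) Ah) (AutC _ Ahv)) => y Gy.
  have Gy' : h^-1 y \in G := Aut_closed (groupVr Ah) Gy.
  rewrite conjgE !permM conj_autE // conj_autE //.
  transitivity (autm Ah (h^-1 y ^ v)) => //; rewrite morphJ //; exact: (congr1 (conjg^~ (h v)) (permKV h y)).
have sNA : NA (Aut G) D \subset Aut G by apply/subsetP => h /setIdP[].
have nKA : Aut G \subset 'N(conj_aut G @* V).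
  apply/subsetP => h Ah; rewrite inE; apply/subsetP => _ /imsetP[k Kk ->].
  case/morphimP: Kk => v Nv Vv ->; rewrite conjK ?(subsetP sVG) //.
  have hvV : h v \in V by rewrite -(autV h Ah) imset_f.
  by rewrite mem_morphim // (subsetP sVN).
have nKH : NA (Aut G) D \subset 'N(conj_aut G @* V) := subset_trans sNA nKA.
have tiKH : conj_aut G @* V :&: NA (Aut G) D = 1.
  apply/trivgP/subsetP => k /setIP[/morphimP[v Nv Vv ->] /setIdP[_ /eqP kD]].
  suff ->: v = 1 by rewrite morph1 inE.
  apply: cVD1 => //; apply/centP => d Dd.
  have Gd := subsetP sDG d Dd; have Gv := subsetP sVG v Vv.
  have Dvd : d ^ v \in D by rewrite -kD -(conj_autE (G:=G)) // imset_f.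
  have : [~ d, v] \in V :&: D.
    rewrite inE; apply/andP; split.
      by rewrite commgEr groupM // memJ_norm ?groupV // (subsetP nVD).
    by rewrite commgEl groupM ?groupV.
  rewrite tiVD inE => /commgP cdv; exact: commute_sym.
have sAKH : Aut G \subset conj_aut G @* V * NA (Aut G) D.
  apply/subsetP => f Af.
  have [x Vx defD] : exists2 x, x \in V & (autm Af @* D) :=: D :^ x.
    apply: SchurZassenhaus_trans_sol => //.
    - exact: abelian_sol (abelem_abelian abV).
    - by rewrite mulVD (subset_trans (morphimS _ sDG)) ?im_autm.
    - by rewrite card_injm ?injm_autm.
  have Gx := subsetP sVG x Vx.
  rewrite -(normC nKH).
  have ->: f = (f * (conj_aut G x)^-1) * conj_aut G x by rewrite mulgKV.
  apply: mem_mulg; last by rewrite mem_morphim ?(subsetP sVN).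
  rewrite inE groupM ?groupV ?AutC //=.
  have fD : f @: D = D :^ x by rewrite -defD morphimEsub.
  have sDxG : D :^ x \subset G by rewrite -(conjGid Gx) conjSg.
  apply/eqP; rewrite (eq_imset _ (permM f _)) imset_comp fD -morphV ?(subsetP sVN) //.
  rewrite -[RHS](conjsgK x D) /conjugate; apply: eq_in_imset => y Dxy.
  by rewrite conj_autE ?groupV // (subsetP sDxG).
rewrite InnE; split.
  rewrite sdprodE //; apply/eqP; rewrite eqEsubset sAKH andbT mul_subG //.
  exact: Aut_conj_aut.
rewrite isog_sym.
have injR : 'injm (restrm sVN (conj_aut G)).
  rewrite ker_restrm ker_conj_aut; apply/subsetP => v /setIP[Vv cGv].
  by rewrite inE (cVD1 v) //; exact: subsetP (centS sDG) v cGv.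
by have := sub_isog (subxx V) injR; rewrite morphim_restrm setIid.
Qed.
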